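(* The metric space $(\mathcal M/\!\sim,d_{\mathrm{GH}})$ is a geodesic space: for any $[X],[Y]\in\mathcal M/\!\sim$ there exists a continuous curve $\gamma:[0,1]\to\mathcal M/\!\sim$ with $\gamma(0)=[X]$, $\gamma(1)=[Y]$ and $d_{\mathrm{GH}}(\gamma(s),\gamma(t))=|t-s|\,d_{\mathrm{GH}}([X],[Y])$ for all $s,t\in[0,1]$.
   Context: $\mathcal M$ is the collection of compact metric spaces; $X\sim Y$ iff $X$ and $Y$ are isometric, and $d_{\mathrm{GH}}([X],[Y]):=d_{\mathrm{GH}}(X,Y)$. Here $d_{\mathrm{GH}}(X,Y)=\tfrac12\inf_{R}\operatorname{dis}(R)$, the infimum over all correspondences $R\subseteq X\times Y$ (relations whose projections onto $X$ and $Y$ are surjective), with $\operatorname{dis}(R)=\sup_{(x,y),(x',y')\in R}|d_X(x,x')-d_Y(y,y')|$. *)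

(* Defs.v *)
From Stdlib Require Import Reals Lra ClassicalEpsilon.
Open Scope R_scope.

Record CMS : Type := {
  carrier :> Type;
  dist : carrier -> carrier -> R;
  dist_nonneg : forall x y, 0 <= dist x y;
  dist_eq0 : forall x y, dist x y = 0 <-> x = y;
  dist_sym : forall x y, dist x y = dist y x;
  dist_tri : forall x y z, dist x z <= dist x y + dist y z;
  cms_inhabited : inhabited carrier;
  cms_compact : forall u : nat -> carrier,
      exists (phi : nat -> nat) (l : carrier),
        (forall n, (phi n < phi (S n))%nat) /\
        (forall eps, eps > 0 -> exists N, forall n, (n >= N)%nat ->
             dist (u (phi n)) l < eps)
}.

Arguments dist {c} _ _.

Definition isometric (X Y : CMS) : Prop :=
  exists f : X -> Y,
    (forall x x', dist (f x) (f x') = dist x x') /\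
    (forall y : Y, exists x, f x = y).

Definition correspondence (X Y : CMS) (Rl : X -> Y -> Prop) : Prop :=
  (forall x : X, exists y : Y, Rl x y) /\ (forall y : Y, exists x : X, Rl x y).

Definition is_glb (E : R -> Prop) (m : R) : Prop :=
  (forall x, E x -> m <= x) /\ (forall b, (forall x, E x -> b <= x) -> b <= m).

Definition distortion (X Y : CMS) (Rl : X -> Y -> Prop) : R :=
  epsilon (inhabits 0) (fun s => is_lub (fun v => exists x y x' y',
     Rl x y /\ Rl x' y' /\ v = Rabs (dist x x' - dist y y')) s).

Definition dGH (X Y : CMS) : R :=
  epsilon (inhabits 0) (fun m => is_glb (fun v => exists Rl,
     correspondence X Y Rl /\ v = distortion X Y Rl / 2) m).

(* Main.v *)
Require Import Defs.
From Stdlib Require Import Reals Lra Lia ClassicalEpsilon ProofIrrelevance Classical List Cantor ZArith.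
Import Defs.
Open Scope R_scope.

Definition conv (K : CMS) (u : nat -> K) (l : K) : Prop :=
  forall eps, eps > 0 -> exists N, forall n, (n >= N)%nat -> dist (u n) l < eps.

Lemma incr_ge (phi : nat -> nat) : (forall n, (phi n < phi (S n))%nat) -> forall n, (phi n >= n)%nat.
Proof. intros H n; induction n; [lia|]. specialize (H n); lia. Qed.

Lemma incr_mono (phi : nat -> nat) : (forall n, (phi n < phi (S n))%nat) ->
  forall m n, (m < n)%nat -> (phi m < phi n)%nat.
Proof. intros H m n Hmn; induction Hmn; [apply H|]. specialize (H m0); lia. Qed.

Lemma conv_sub (K : CMS) (u : nat -> K) l (s : nat -> nat) :
  conv K u l -> (forall n, (s n >= n)%nat) -> conv K (fun n => u (s n)) l.
Proof.
  intros H Hs eps He; destruct (H eps He) as [N HN]; exists N; intros n Hn.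
  apply HN; specialize (Hs n); lia.
Qed.

Lemma dist_diff (K : CMS) (x x' p p' : K) :
  Rabs (dist x x' - dist p p') <= dist x p + dist x' p'.
Proof.
  pose proof (dist_tri K x p x'); pose proof (dist_tri K p p' x');
  pose proof (dist_tri K p x p'); pose proof (dist_tri K x x' p');
  pose proof (dist_sym K x p); pose proof (dist_sym K x' p').
  apply Rabs_le; lra.
Qed.

Lemma arch_inv (eta : R) : eta > 0 -> exists N, forall n, (n >= N)%nat -> / (INR n + 1) < eta.
Proof.
  intros He. destruct (archimed (/ eta)) as [H1 _].
  assert (Hpos : (0 < IZR (up (/eta)))%R) by (pose proof (Rinv_0_lt_compat eta He); lra).
  exists (Z.to_nat (up (/ eta))). intros n Hn.
  assert (INR n >= IZR (up (/ eta))).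
  { assert (Hz : (0 <= up (/eta))%Z) by (apply le_IZR; lra).
    rewrite <- (Z2Nat.id _ Hz). rewrite <- INR_IZR_INZ. apply Rle_ge, le_INR; lia. }
  pose proof (pos_INR n).
  rewrite <- (Rinv_inv eta). apply Rinv_lt_contravar.
  apply Rmult_lt_0_compat; [apply Rinv_0_lt_compat; lra | lra]. lra.
Qed.

Lemma arch_nat (r : R) : exists N, forall n, (n >= N)%nat -> INR n > r.
Proof.
  destruct (archimed (Rabs r)) as [H1 _].
  assert (Hz : (0 <= up (Rabs r))%Z) by (apply le_IZR; pose proof (Rabs_pos r); lra).
  exists (Z.to_nat (up (Rabs r))). intros n Hn.
  assert (INR n >= IZR (up (Rabs r))).
  { rewrite <- (Z2Nat.id _ Hz). rewrite <- INR_IZR_INZ. apply Rle_ge, le_INR; lia. }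
  pose proof (Rle_abs r); lra.
Qed.

Lemma bounded (K : CMS) : exists M, forall x y : K, dist x y <= M.
Proof.
  destruct (cms_inhabited K) as [x0].
  assert (exists M, forall y : K, dist x0 y <= M).
  { apply NNPP; intro Hn.
    assert (Hu : forall n : nat, exists y : K, dist x0 y > INR n).
    { intro n. apply NNPP; intro Hc. apply Hn. exists (INR n). intro y.
      apply Rnot_lt_le; intro; apply Hc; exists y; lra. }
    set (u := fun n => epsilon (cms_inhabited K) (fun y => dist x0 y > INR n)).
    assert (Hu' : forall n, dist x0 (u n) > INR n) by (intro n; apply (epsilon_spec _ _ (Hu n))).
    destruct (cms_compact K u) as (phi & l & Hphi & Hc).
    destruct (Hc 1 ltac:(lra)) as [N HN].
    destruct (arch_nat (dist x0 l + 2)) as [N2 HN2].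
    set (n := max N N2). specialize (HN n ltac:(lia)). specialize (HN2 n ltac:(lia)).
    pose proof (incr_ge phi Hphi n) as Hge. apply le_INR in Hge.
    specialize (Hu' (phi n)).
    pose proof (dist_tri K x0 l (u (phi n))). rewrite (dist_sym K l) in H.
    pose proof (dist_nonneg K x0 l). pose proof (pos_INR n).
    lra. }
  destruct H as [M HM]; exists (M + M); intros x y.
  pose proof (dist_tri K x x0 y); rewrite (dist_sym K x x0) in H; pose proof (HM x); pose proof (HM y); lra.
Qed.
Definition Dset (X Y : CMS) (Rl : X -> Y -> Prop) : R -> Prop :=
  fun v => exists x y x' y', Rl x y /\ Rl x' y' /\ v = Rabs (dist x x' - dist y y').

Lemma dis_lub (X Y : CMS) Rl : correspondence X Y Rl -> is_lub (Dset X Y Rl) (distortion X Y Rl).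
Proof.
  intros [H1 H2]. unfold distortion. apply epsilon_spec.
  destruct (bounded X) as [Mx HMx]; destruct (bounded Y) as [My HMy].
  destruct (completeness (Dset X Y Rl)) as [m Hm].
  - exists (Mx + My). intros v (x & y & x' & y' & _ & _ & ->).
    pose proof (HMx x x'); pose proof (HMy y y');
    pose proof (dist_nonneg X x x'); pose proof (dist_nonneg Y y y').
    apply Rabs_le; lra.
  - destruct (cms_inhabited X) as [x]. destruct (H1 x) as [y Hy].
    exists (Rabs (dist x x - dist y y)). exists x, y, x, y; auto.
  - exists m; exact Hm.
Qed.

Lemma dis_ge (X Y : CMS) Rl : correspondence X Y Rl ->
  forall x y x' y', Rl x y -> Rl x' y' -> Rabs (dist x x' - dist y y') <= distortion X Y Rl.
Proof.
  intros Hc x y x' y' H H'. apply (proj1 (dis_lub X Y Rl Hc)). exists x, y, x', y'; auto.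
Qed.

Lemma dis_le (X Y : CMS) Rl K : correspondence X Y Rl ->
  (forall x y x' y', Rl x y -> Rl x' y' -> Rabs (dist x x' - dist y y') <= K) ->
  distortion X Y Rl <= K.
Proof.
  intros Hc H. apply (proj2 (dis_lub X Y Rl Hc)). intros v (x & y & x' & y' & h1 & h2 & ->); auto.
Qed.

Lemma dis_nonneg (X Y : CMS) Rl : correspondence X Y Rl -> 0 <= distortion X Y Rl.
Proof.
  intros Hc. destruct (cms_inhabited X) as [x]. destruct (proj1 Hc x) as [y Hy].
  eapply Rle_trans; [apply Rabs_pos|]. apply (dis_ge X Y Rl Hc x y x y Hy Hy).
Qed.

Definition Gset (X Y : CMS) : R -> Prop := fun v => exists Rl,
     correspondence X Y Rl /\ v = distortion X Y Rl / 2.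

Lemma dGH_glb (X Y : CMS) : is_glb (Gset X Y) (dGH X Y).
Proof.
  unfold dGH. apply epsilon_spec.
  destruct (completeness (fun v => Gset X Y (- v))) as [m Hm].
  - exists 0. intros v (Rl & Hc & Hv). pose proof (dis_nonneg X Y Rl Hc). lra.
  - exists (- (distortion X Y (fun _ _ => True) / 2)). exists (fun _ _ => True). split.
    + split; intro z. destruct (cms_inhabited Y) as [y]; exists y; auto.
      destruct (cms_inhabited X) as [x]; exists x; auto.
    + lra.
  - exists (- m). destruct Hm as [Hm1 Hm2]. split.
    + intros x Hx. assert (- x <= m) by (apply Hm1; now rewrite Ropp_involutive). lra.
    + intros b Hb. assert (m <= - b). { apply Hm2. intros v Hv. specialize (Hb _ Hv). lra. } lra.
Qed.

Lemma dGH_le (X Y : CMS) Rl : correspondence X Y Rl -> dGH X Y <= distortion X Y Rl / 2.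
Proof. intros Hc. apply (proj1 (dGH_glb X Y)). exists Rl; auto. Qed.

Lemma dGH_nonneg (X Y : CMS) : 0 <= dGH X Y.
Proof.
  apply (proj2 (dGH_glb X Y)). intros v (Rl & Hc & ->). pose proof (dis_nonneg X Y Rl Hc). lra.
Qed.

Lemma dGH_approx (X Y : CMS) eps : eps > 0 -> exists Rl, correspondence X Y Rl /\
  forall x y x' y', Rl x y -> Rl x' y' -> Rabs (dist x x' - dist y y') <= 2 * dGH X Y + eps.
Proof.
  intros He. apply NNPP; intro Hn.
  assert (dGH X Y + eps / 2 <= dGH X Y); [|lra].
  apply (proj2 (dGH_glb X Y)). intros v (Rl & Hc & ->).
  apply Rnot_lt_le; intro Hlt. apply Hn. exists Rl; split; auto.
  intros. pose proof (dis_ge X Y Rl Hc x y x' y' H H0). lra.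
Qed.

Lemma gh_bound (A B : CMS) (S : Type) (f : S -> A) (g : S -> B) K :
  (forall a, exists p, f p = a) -> (forall b, exists p, g p = b) ->
  (forall p q, Rabs (dist (f p) (f q) - dist (g p) (g q)) <= K) -> dGH A B <= K / 2.
Proof.
  intros Hf Hg HK.
  set (Rl := fun (a : A) (b : B) => exists p, f p = a /\ g p = b).
  assert (Hc : correspondence A B Rl).
  { split.
    - intro a. destruct (Hf a) as [p <-]. exists (g p), p; auto.
    - intro b. destruct (Hg b) as [p <-]. exists (f p), p; auto. }
  eapply Rle_trans; [apply (dGH_le A B Rl Hc)|].
  assert (distortion A B Rl <= K); [|lra].
  apply dis_le; auto. intros x y x' y' (p & <- & <-) (q & <- & <-). apply HK.
Qed.

Lemma dGH_sym (X Y : CMS) : dGH X Y <= dGH Y X.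
Proof.
  apply Rle_plus_epsilon; intros eps He.
  destruct (dGH_approx Y X (2 * eps) ltac:(lra)) as (Q & Hc & HQ).
  set (S := {p : Y * X | Q (fst p) (snd p)}).
  assert (H := gh_bound X Y S (fun p => snd (proj1_sig p)) (fun p => fst (proj1_sig p))
    (2 * dGH Y X + 2 * eps)).
  assert (dGH X Y <= (2 * dGH Y X + 2 * eps) / 2); [|lra].
  apply H.
  - intro x. destruct (proj2 Hc x) as [y Hy]. exists (exist _ (y, x) Hy); reflexivity.
  - intro y. destruct (proj1 Hc y) as [x Hx]. exists (exist _ (y, x) Hx); reflexivity.
  - intros [[y x] h] [[y' x'] h']; simpl in *. rewrite Rabs_minus_sym. apply HQ; auto.
Qed.

Lemma dGH_tri (X Y Z : CMS) : dGH X Z <= dGH X Y + dGH Y Z.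
Proof.
  apply Rle_plus_epsilon; intros eps He.
  destruct (dGH_approx X Y eps He) as (Q1 & Hc1 & HQ1).
  destruct (dGH_approx Y Z eps He) as (Q2 & Hc2 & HQ2).
  set (S := {p : X * Y * Z | Q1 (fst (fst p)) (snd (fst p)) /\ Q2 (snd (fst p)) (snd p)}).
  assert (H := gh_bound X Z S (fun p => fst (fst (proj1_sig p))) (fun p => snd (proj1_sig p))
    (2 * dGH X Y + eps + (2 * dGH Y Z + eps))).
  assert (dGH X Z <= (2 * dGH X Y + eps + (2 * dGH Y Z + eps)) / 2); [|lra].
  apply H.
  - intro x. destruct (proj1 Hc1 x) as [y Hy]. destruct (proj1 Hc2 y) as [z Hz].
    exists (exist _ (x, y, z) (conj Hy Hz)); reflexivity.
  - intro z. destruct (proj2 Hc2 z) as [y Hy]. destruct (proj2 Hc1 y) as [x Hx].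
    exists (exist _ (x, y, z) (conj Hx Hy)); reflexivity.
  - intros [[[x y] z] [h1 h2]] [[[x' y'] z'] [h1' h2']]; simpl in *.
    specialize (HQ1 _ _ _ _ h1 h1'); specialize (HQ2 _ _ _ _ h2 h2').
    replace (dist x x' - dist z z') with ((dist x x' - dist y y') + (dist y y' - dist z z')) by ring.
    eapply Rle_trans; [apply Rabs_triang|]. lra.
Qed.
Lemma finite_net (K : CMS) eps : eps > 0 ->
  exists L : list K, forall x, exists z, In z L /\ dist x z < eps.
Proof.
  intros He. apply NNPP; intro Hn.
  assert (Hf : forall L : list K, exists x, forall z, In z L -> dist x z >= eps).
  { intro L. apply NNPP; intro Hc. apply Hn. exists L. intro x.
    apply NNPP; intro Hc2. apply Hc. exists x. intros z Hz.
    apply Rnot_lt_ge; intro; apply Hc2; exists z; auto. }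
  set (next := fun L : list K => epsilon (cms_inhabited K) (fun x => forall z, In z L -> dist x z >= eps)).
  assert (Hnext : forall L z, In z L -> dist (next L) z >= eps)
    by (intro L; apply (epsilon_spec _ _ (Hf L))).
  set (build := fix build (n : nat) : list K := match n with O => nil | S m => next (build m) :: build m end).
  set (u := fun n => next (build n)).
  assert (Hin : forall m n, (m < n)%nat -> In (u m) (build n)).
  { intros m n Hmn; induction Hmn; simpl; auto. }
  destruct (cms_compact K u) as (phi & l & Hphi & Hc).
  destruct (Hc (eps / 2) ltac:(lra)) as [N HN].
  pose proof (HN N ltac:(lia)); pose proof (HN (S N) ltac:(lia)).
  pose proof (Hnext _ _ (Hin _ _ (Hphi N))).
  pose proof (dist_tri K (u (phi (S N))) l (u (phi N))).
  rewrite (dist_sym K l) in H2. fold (u (phi (S N))) in H1. lra.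
Qed.

Lemma dense_seq (K : CMS) : exists a : nat -> K, forall x eps, eps > 0 -> exists i, dist x (a i) < eps.
Proof.
  destruct (cms_inhabited K) as [x0].
  assert (Hn : forall k : nat, exists L : list K, forall x, exists z, In z L /\ dist x z < / (INR k + 1)).
  { intro k. apply finite_net. apply Rinv_0_lt_compat. pose proof (pos_INR k); lra. }
  set (net := fun k => epsilon (inhabits nil) (fun L : list K => forall x, exists z, In z L /\ dist x z < / (INR k + 1))).
  assert (Hnet : forall k x, exists z, In z (net k) /\ dist x z < / (INR k + 1))
    by (intro k; apply (epsilon_spec _ _ (Hn k))).
  exists (fun n => let (k, i) := of_nat n in nth i (net k) x0).
  intros x eps He. destruct (arch_inv eps He) as [N HN].
  destruct (Hnet N x) as (z & Hz & Hd).
  destruct (In_nth _ _ x0 Hz) as (i & _ & Hi).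
  exists (to_nat (N, i)). rewrite cancel_of_to. rewrite Hi. specialize (HN N (le_n _)). lra.
Qed.

Definition ext (K : CMS) (u : nat -> K) : nat -> nat :=
  epsilon (inhabits (fun n : nat => n)) (fun phi => (forall n, (phi n < phi (S n))%nat) /\ exists l, conv K (fun n => u (phi n)) l).

Lemma ext_spec (K : CMS) u : (forall n, (ext K u n < ext K u (S n))%nat) /\ exists l, conv K (fun n => u (ext K u n)) l.
Proof.
  unfold ext. apply epsilon_spec. destruct (cms_compact K u) as (phi & l & H1 & H2).
  exists phi; split; auto. exists l; exact H2.
Qed.

Definition tailsub (w' w : nat -> nat) := forall n, exists m, (m >= n)%nat /\ w' n = w m.

Fixpoint ph (K : CMS) (v : nat -> nat -> K) (k : nat) : nat -> nat :=
  match k with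
  | O => fun n => n
  | S k' => fun n => ph K v k' (ext K (fun m => v k' (ph K v k' m)) n)
  end.

Lemma diagonal (K : CMS) (v : nat -> nat -> K) :
  exists e : nat -> nat, (forall n, (e n >= n)%nat) /\ forall i, exists l, conv K (fun n => v i (e n)) l.
Proof.
  assert (Hstep : forall k, tailsub (ph K v (S k)) (ph K v k)).
  { intros k n. simpl. exists (ext K (fun m => v k (ph K v k m)) n). split; auto.
    apply incr_ge. apply ext_spec. }
  assert (Hts : forall k j, (k <= j)%nat -> tailsub (ph K v j) (ph K v k)).
  { intros k j Hkj; induction Hkj.
    - intro n; exists n; auto.
    - intro n. destruct (Hstep m n) as (m1 & Hm1 & E1). destruct (IHHkj m1) as (m2 & Hm2 & E2).
      exists m2; split; [lia|]. congruence. }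
  exists (fun n => ph K v n n). split.
  - intro n. destruct (Hts 0%nat n ltac:(lia) n) as (m & Hm & E). rewrite E; simpl; lia.
  - intro i. destruct (proj2 (ext_spec K (fun m => v i (ph K v i m)))) as [l Hl].
    exists l. intros eps He. destruct (Hl eps He) as [N HN]. exists (max N (S i)). intros n Hn.
    destruct (Hts (S i) n ltac:(lia) n) as (m & Hm & E). rewrite E. simpl.
    destruct (Hts (S i) n ltac:(lia) n) as (m' & Hm' & E'). clear E'.
    apply HN. lia.
Qed.
Definition closedR (X Y : CMS) (Rl : X -> Y -> Prop) :=
  forall (xs : nat -> X) (ys : nat -> Y) x y, (forall n, Rl (xs n) (ys n)) -> conv X xs x -> conv Y ys y -> Rl x y.

Lemma limR_closed (X Y : CMS) (Q : nat -> X -> Y -> Prop) :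
  closedR X Y (fun x y => forall eps, eps > 0 -> exists N, forall n, (n >= N)%nat ->
      exists x' y', Q n x' y' /\ dist x x' < eps /\ dist y y' < eps).
Proof.
  intros xs ys x y Hr Hx Hy eps He.
  destruct (Hx (eps/2) ltac:(lra)) as [N1 H1]. destruct (Hy (eps/2) ltac:(lra)) as [N2 H2].
  set (k := max N1 N2). destruct (Hr k (eps/2) ltac:(lra)) as [N HN].
  exists N. intros n Hn. destruct (HN n Hn) as (x' & y' & HQ & Hdx & Hdy).
  exists x', y'. split; auto. specialize (H1 k ltac:(lia)); specialize (H2 k ltac:(lia)).
  pose proof (dist_tri X x (xs k) x'); pose proof (dist_tri Y y (ys k) y').
  rewrite (dist_sym X x (xs k)) in H. rewrite (dist_sym Y y (ys k)) in H0. lra.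
Qed.

Lemma limR_corr (X Y : CMS) (Q : nat -> X -> Y -> Prop) (a : nat -> X) (yy : nat -> nat -> Y) (Yl : nat -> Y) :
  (forall x eps, eps > 0 -> exists i, dist x (a i) < eps) ->
  (forall n i, Q n (a i) (yy n i)) ->
  (forall i, conv Y (fun n => yy n i) (Yl i)) ->
  forall x, exists y, forall eps, eps > 0 -> exists N, forall n, (n >= N)%nat ->
      exists x' y', Q n x' y' /\ dist x x' < eps /\ dist y y' < eps.
Proof.
  intros Hd HQ Hl x.
  assert (Hi : forall k : nat, exists i, dist x (a i) < / (INR k + 1)).
  { intro k; apply Hd. apply Rinv_0_lt_compat. pose proof (pos_INR k); lra. }
  set (idx := fun k => epsilon (inhabits 0%nat) (fun i => dist x (a i) < / (INR k + 1))).
  assert (Hidx : forall k, dist x (a (idx k)) < / (INR k + 1)) by (intro k; apply (epsilon_spec _ _ (Hi k))).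
  destruct (cms_compact Y (fun k => Yl (idx k))) as (phi & y & Hphi & Hc).
  exists y. intros eps He.
  destruct (Hc (eps/3) ltac:(lra)) as [N1 H1]. destruct (arch_inv (eps/3) ltac:(lra)) as [N2 H2].
  set (k := max N1 N2). specialize (H1 k ltac:(lia)).
  assert (Hk : / (INR (phi k) + 1) < eps / 3).
  { apply H2. pose proof (incr_ge phi Hphi k). lia. }
  specialize (Hidx (phi k)).
  destruct (Hl (idx (phi k)) (eps/3) ltac:(lra)) as [N HN].
  exists N. intros n Hn. exists (a (idx (phi k))), (yy n (idx (phi k))). split; [apply HQ|].
  split; [lra|]. specialize (HN n Hn).
  pose proof (dist_tri Y y (Yl (idx (phi k))) (yy n (idx (phi k)))).
  rewrite (dist_sym Y (Yl _) y) in H1. rewrite (dist_sym Y (yy n _)) in HN. lra.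
Qed.
Lemma optimal (X Y : CMS) : exists Rl, correspondence X Y Rl /\ closedR X Y Rl /\
  forall x y x' y', Rl x y -> Rl x' y' -> Rabs (dist x x' - dist y y') <= 2 * dGH X Y.
Proof.
  set (d := dGH X Y).
  set (P := fun n (Rl : X -> Y -> Prop) => correspondence X Y Rl /\
     forall x y x' y', Rl x y -> Rl x' y' -> Rabs (dist x x' - dist y y') <= 2 * d + / (INR n + 1)).
  set (Q := fun n => epsilon (inhabits (fun (_ : X) (_ : Y) => True)) (P n)).
  assert (HQ : forall n, P n (Q n)).
  { intro n. unfold Q. apply (epsilon_spec _ (P n)). apply dGH_approx. apply Rinv_0_lt_compat. pose proof (pos_INR n); lra. }
  destruct (dense_seq X) as [a Ha]. destruct (dense_seq Y) as [b Hb].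
  set (yy := fun n i => epsilon (cms_inhabited Y) (fun y => Q n (a i) y)).
  assert (Hyy : forall n i, Q n (a i) (yy n i)).
  { intros n i. unfold yy. apply (epsilon_spec _ (fun y => Q n (a i) y)). apply (proj1 (proj1 (HQ n))). }
  set (xx := fun n j => epsilon (cms_inhabited X) (fun x => Q n x (b j))).
  assert (Hxx : forall n j, Q n (xx n j) (b j)).
  { intros n j. unfold xx. apply (epsilon_spec _ (fun x => Q n x (b j))). apply (proj2 (proj1 (HQ n))). }
  destruct (diagonal Y (fun i n => yy n i)) as (e1 & He1 & Hc1).
  destruct (diagonal X (fun j n => xx (e1 n) j)) as (e2 & He2 & Hc2).
  set (e := fun n => e1 (e2 n)).
  assert (He : forall n, (e n >= n)%nat) by (intro n; unfold e; specialize (He1 (e2 n)); specialize (He2 n); lia).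
  set (Yl := fun i => epsilon (cms_inhabited Y) (fun l => conv Y (fun n => yy (e n) i) l)).
  assert (HYl : forall i, conv Y (fun n => yy (e n) i) (Yl i)).
  { intro i. unfold Yl. apply epsilon_spec. destruct (Hc1 i) as [l Hl]. exists l.
    apply (conv_sub Y (fun n => yy (e1 n) i) l e2 Hl He2). }
  set (Xl := fun j => epsilon (cms_inhabited X) (fun l => conv X (fun n => xx (e n) j) l)).
  assert (HXl : forall j, conv X (fun n => xx (e n) j) (Xl j)).
  { intro j. unfold Xl. apply epsilon_spec. apply (Hc2 j). }
  set (Q' := fun n => Q (e n)).
  exists (fun x y => forall eps, eps > 0 -> exists N, forall n, (n >= N)%nat ->
      exists x' y', Q' n x' y' /\ dist x x' < eps /\ dist y y' < eps).
  split; [split|split].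
  - apply (limR_corr X Y Q' a (fun n i => yy (e n) i) Yl Ha (fun n i => Hyy (e n) i) HYl).
  - intro y. destruct (limR_corr Y X (fun n y x => Q' n x y) b (fun n j => xx (e n) j) Xl Hb
        (fun n j => Hxx (e n) j) HXl y) as [x Hx].
    exists x. intros eps Heps. destruct (Hx eps Heps) as [N HN]. exists N. intros n Hn.
    destruct (HN n Hn) as (y' & x' & H1 & H2 & H3). exists x', y'; auto.
  - apply limR_closed.
  - intros x y x' y' H H'. apply Rle_plus_epsilon; intros eta Heta.
    destruct (H (eta/8) ltac:(lra)) as [N1 HN1]. destruct (H' (eta/8) ltac:(lra)) as [N2 HN2].
    destruct (arch_inv (eta/4) ltac:(lra)) as [N3 HN3].
    set (n := max N1 (max N2 N3)).
    destruct (HN1 n ltac:(lia)) as (p & q & Hpq & Hp & Hq).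
    destruct (HN2 n ltac:(lia)) as (p' & q' & Hpq' & Hp' & Hq').
    pose proof (proj2 (HQ (e n)) p q p' q' Hpq Hpq') as Hb0.
    assert (/ (INR (e n) + 1) <= / (INR n + 1)).
    { apply Rinv_le_contravar. pose proof (pos_INR n); lra. apply Rplus_le_compat_r, le_INR, He. }
    specialize (HN3 n ltac:(lia)).
    pose proof (dist_diff X x x' p p'); pose proof (dist_diff Y y y' q q').
    replace (dist x x' - dist y y') with ((dist x x' - dist p p') + (dist p p' - dist q q') - (dist y y' - dist q q')) by ring.
    eapply Rle_trans; [apply Rabs_triang|]. rewrite Rabs_Ropp.
    eapply Rle_trans; [apply Rplus_le_compat_r, Rabs_triang|]. fold d in Hb0. lra.
Qed.
Definition ZS (X Y : CMS) (Rl : X -> Y -> Prop) := {p : X * Y | Rl (fst p) (snd p)}.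
Definition Zd (X Y : CMS) (Rl : X -> Y -> Prop) (t : R) (p q : ZS X Y Rl) : R :=
  (1 - t) * dist (fst (proj1_sig p)) (fst (proj1_sig q)) + t * dist (snd (proj1_sig p)) (snd (proj1_sig q)).


Lemma Zd_nonneg X Y Rl t (h0 : 0 < t) (h1 : t < 1) : forall p q, 0 <= Zd X Y Rl t p q.
Proof.
  intros p q; unfold Zd. pose proof (dist_nonneg X (fst (proj1_sig p)) (fst (proj1_sig q))).
  pose proof (dist_nonneg Y (snd (proj1_sig p)) (snd (proj1_sig q))).
  apply Rplus_le_le_0_compat; apply Rmult_le_pos; lra.
Qed.

Lemma Zd_eq0 X Y Rl t (h0 : 0 < t) (h1 : t < 1) : forall p q, Zd X Y Rl t p q = 0 <-> p = q.
Proof.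
  intros [[x y] hp] [[x' y'] hq]; unfold Zd; simpl. split.
  - intro H. pose proof (dist_nonneg X x x'). pose proof (dist_nonneg Y y y').
    assert (Ha : (1 - t) * dist x x' = 0) by (pose proof (Rmult_le_pos (1-t) _ ltac:(lra) H0);
      pose proof (Rmult_le_pos t _ ltac:(lra) H1); lra).
    assert (Hb : t * dist y y' = 0) by lra.
    apply Rmult_integral in Ha; apply Rmult_integral in Hb.
    destruct Ha as [Ha|Ha]; [lra|]. destruct Hb as [Hb|Hb]; [lra|].
    apply (dist_eq0 X) in Ha; apply (dist_eq0 Y) in Hb. subst. apply subset_eq_compat. reflexivity.
  - intro H. inversion H; subst. rewrite (proj2 (dist_eq0 X x' x') eq_refl), (proj2 (dist_eq0 Y y' y') eq_refl). ring.
Qed.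

Lemma Zd_sym X Y Rl t : forall p q, Zd X Y Rl t p q = Zd X Y Rl t q p.
Proof. intros p q; unfold Zd; rewrite (dist_sym X), (dist_sym Y); reflexivity. Qed.

Lemma Zd_tri X Y Rl t (h0 : 0 < t) (h1 : t < 1) : forall p q r, Zd X Y Rl t p r <= Zd X Y Rl t p q + Zd X Y Rl t q r.
Proof.
  intros p q r; unfold Zd.
  pose proof (dist_tri X (fst (proj1_sig p)) (fst (proj1_sig q)) (fst (proj1_sig r))).
  pose proof (dist_tri Y (snd (proj1_sig p)) (snd (proj1_sig q)) (snd (proj1_sig r))).
  apply Rmult_le_compat_l with (r := 1 - t) in H; [|lra].
  apply Rmult_le_compat_l with (r := t) in H0; [|lra]. lra.
Qed.

Lemma Z_inh X Y Rl : correspondence X Y Rl -> inhabited (ZS X Y Rl).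
Proof.
  intros Hc. destruct (cms_inhabited X) as [x]. destruct (proj1 Hc x) as [y Hy].
  exact (inhabits (exist _ (x, y) Hy)).
Qed.

Lemma Z_compact X Y Rl t (h0 : 0 < t) (h1 : t < 1) : closedR X Y Rl ->
  forall u : nat -> ZS X Y Rl,
      exists (phi : nat -> nat) (l : ZS X Y Rl),
        (forall n, (phi n < phi (S n))%nat) /\
        (forall eps, eps > 0 -> exists N, forall n, (n >= N)%nat ->
             Zd X Y Rl t (u (phi n)) l < eps).
Proof.
  intros Hcl u.
  destruct (cms_compact X (fun n => fst (proj1_sig (u n)))) as (phi1 & x & Hp1 & Hx).
  destruct (cms_compact Y (fun n => snd (proj1_sig (u (phi1 n))))) as (phi2 & y & Hp2 & Hy).
  assert (Hxy : Rl x y).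
  { apply (Hcl (fun n => fst (proj1_sig (u (phi1 (phi2 n))))) (fun n => snd (proj1_sig (u (phi1 (phi2 n)))))).
    - intro n. apply (proj2_sig (u (phi1 (phi2 n)))).
    - apply (conv_sub X (fun n => fst (proj1_sig (u (phi1 n)))) x phi2).
      exact Hx. intro n. pose proof (incr_ge _ Hp2 n); lia.
    - exact Hy. }
  exists (fun n => phi1 (phi2 n)), (exist _ (x, y) Hxy). split.
  - intro n. apply incr_mono; auto.
  - intros eps He. destruct (Hx eps He) as [N1 H1]. destruct (Hy eps He) as [N2 H2].
    exists (max N1 N2). intros n Hn. unfold Zd; simpl.
    specialize (H2 n ltac:(lia)).
    assert (phi2 n >= N1)%nat by (pose proof (incr_ge _ Hp2 n); lia).
    specialize (H1 _ H). simpl in H1, H2.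
    apply Rmult_lt_compat_l with (r := 1 - t) in H1; [|lra].
    apply Rmult_lt_compat_l with (r := t) in H2; [|lra]. lra.
Qed.

Definition Zcms X Y Rl t (h0 : 0 < t) (h1 : t < 1) (hc : correspondence X Y Rl) (hcl : closedR X Y Rl) : CMS :=
  Build_CMS (ZS X Y Rl) (Zd X Y Rl t) (Zd_nonneg X Y Rl t h0 h1) (Zd_eq0 X Y Rl t h0 h1)
    (Zd_sym X Y Rl t) (Zd_tri X Y Rl t h0 h1) (Z_inh X Y Rl hc) (Z_compact X Y Rl t h0 h1 hcl).

Definition gam X Y Rl (hc : correspondence X Y Rl) (hcl : closedR X Y Rl) (t : R) : CMS :=
  match Rle_dec t 0 with
  | left _ => X
  | right h0 => match Rle_dec 1 t with
     | left _ => Y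
     | right h1 => Zcms X Y Rl t (Rnot_le_lt _ _ h0) (Rnot_le_lt _ _ h1) hc hcl
     end
  end.

Definition param (X Y : CMS) Rl (A : CMS) (s : R) : Prop :=
  exists f : ZS X Y Rl -> A, (forall a, exists p, f p = a) /\
    forall p q, dist (f p) (f q) = (1 - s) * dist (fst (proj1_sig p)) (fst (proj1_sig q))
                                   + s * dist (snd (proj1_sig p)) (snd (proj1_sig q)).

Lemma param_gam X Y Rl hc hcl s : 0 <= s <= 1 -> param X Y Rl (gam X Y Rl hc hcl s) s.
Proof.
  intros Hs. unfold gam. destruct (Rle_dec s 0) as [h0|h0].
  - assert (s = 0) by lra. subst. exists (fun p => fst (proj1_sig p)). split.
    + intro x. destruct (proj1 hc x) as [y Hy]. exists (exist _ (x, y) Hy); reflexivity.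
    + intros; ring.
  - destruct (Rle_dec 1 s) as [h1|h1].
    + assert (s = 1) by lra. subst. exists (fun p => snd (proj1_sig p)). split.
      * intro y. destruct (proj2 hc y) as [x Hx]. exists (exist _ (x, y) Hx); reflexivity.
      * intros; ring.
    + exists (fun p => p). split.
      * intro a; exists a; reflexivity.
      * intros; reflexivity.
Qed.

Lemma param_X X Y Rl : correspondence X Y Rl -> param X Y Rl X 0.
Proof.
  intros hc. exists (fun p => fst (proj1_sig p)). split.
  + intro x. destruct (proj1 hc x) as [y Hy]. exists (exist _ (x, y) Hy); reflexivity.
  + intros; ring.
Qed.

Lemma param_Y X Y Rl : correspondence X Y Rl -> param X Y Rl Y 1.
Proof.
  intros hc. exists (fun p => snd (proj1_sig p)). split.
  + intro y. destruct (proj2 hc y) as [x Hx]. exists (exist _ (x, y) Hx); reflexivity.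
  + intros; ring.
Qed.

Lemma param_bound X Y Rl (A B : CMS) s t D :
  (forall x y x' y', Rl x y -> Rl x' y' -> Rabs (dist x x' - dist y y') <= 2 * D) ->
  param X Y Rl A s -> param X Y Rl B t -> dGH A B <= Rabs (t - s) * D.
Proof.
  intros HD (f & Hf & Ef) (g & Hg & Eg).
  assert (H := gh_bound A B (ZS X Y Rl) f g (Rabs (t - s) * (2 * D)) Hf Hg).
  assert (dGH A B <= Rabs (t - s) * (2 * D) / 2); [|lra].
  apply H. intros p q. rewrite Ef, Eg.
  replace ((1 - s) * dist (fst (proj1_sig p)) (fst (proj1_sig q)) + s * dist (snd (proj1_sig p)) (snd (proj1_sig q)) -
    ((1 - t) * dist (fst (proj1_sig p)) (fst (proj1_sig q)) + t * dist (snd (proj1_sig p)) (snd (proj1_sig q))))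
    with ((t - s) * (dist (fst (proj1_sig p)) (fst (proj1_sig q)) - dist (snd (proj1_sig p)) (snd (proj1_sig q)))) by ring.
  rewrite Rabs_mult. apply Rmult_le_compat_l; [apply Rabs_pos|].
  apply HD; apply (proj2_sig p) || apply (proj2_sig q).
Qed.

Theorem mainTheorem3 (X Y : CMS) :
  exists gamma : R -> CMS,
    isometric (gamma 0) X /\ isometric (gamma 1) Y /\
    (forall s, 0 <= s <= 1 -> forall eps, eps > 0 ->
       exists delta, delta > 0 /\
         forall t, 0 <= t <= 1 -> Rabs (t - s) < delta ->
           dGH (gamma s) (gamma t) < eps) /\
    (forall s t, 0 <= s <= 1 -> 0 <= t <= 1 ->
       dGH (gamma s) (gamma t) = Rabs (t - s) * dGH X Y).
Proof.
  destruct (optimal X Y) as (Rl & hc & hcl & HD).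
  set (d := dGH X Y). fold d in HD.
  assert (Hd0 : 0 <= d) by apply dGH_nonneg.
  assert (Heq : forall s t, 0 <= s <= 1 -> 0 <= t <= 1 ->
     dGH (gam X Y Rl hc hcl s) (gam X Y Rl hc hcl t) = Rabs (t - s) * d).
  { assert (Hup : forall s t, 0 <= s <= 1 -> 0 <= t <= 1 ->
       dGH (gam X Y Rl hc hcl s) (gam X Y Rl hc hcl t) <= Rabs (t - s) * d).
    { intros s t Hs Ht. apply (param_bound X Y Rl _ _ s t d HD); apply param_gam; auto. }
    assert (Hlow : forall s t, 0 <= s <= 1 -> 0 <= t <= 1 -> s <= t ->
       (t - s) * d <= dGH (gam X Y Rl hc hcl s) (gam X Y Rl hc hcl t)).
    { intros s t Hs Ht Hst.
      pose proof (dGH_tri X (gam X Y Rl hc hcl s) Y).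
      pose proof (dGH_tri (gam X Y Rl hc hcl s) (gam X Y Rl hc hcl t) Y).
      pose proof (param_bound X Y Rl _ _ 0 s d HD (param_X X Y Rl hc) (param_gam X Y Rl hc hcl s Hs)).
      pose proof (param_bound X Y Rl _ _ t 1 d HD (param_gam X Y Rl hc hcl t Ht) (param_Y X Y Rl hc)).
      rewrite Rabs_right in H1 by lra. rewrite Rabs_right in H2 by lra. fold d in H. nra. }
    intros s t Hs Ht. apply Rle_antisym; [apply Hup; auto|].
    destruct (Rle_dec s t).
    - rewrite Rabs_right by lra. apply Hlow; auto.
    - rewrite Rabs_left by lra. eapply Rle_trans; [|apply dGH_sym].
      replace (- (t - s) * d) with ((s - t) * d) by ring. apply Hlow; auto; lra. }
  exists (gam X Y Rl hc hcl). split; [|split; [|split]].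
  - unfold gam. destruct (Rle_dec 0 0) as [h0|h]; [|exfalso; lra].
    exists (fun x => x). split; auto. intro y; exists y; auto.
  - unfold gam. destruct (Rle_dec 1 0) as [h|h0]; [exfalso; lra|].
    destruct (Rle_dec 1 1) as [h1|h]; [|exfalso; lra].
    exists (fun x => x). split; auto. intro y; exists y; auto.
  - intros s Hs eps He. exists (eps / (d + 1)). split.
    + apply Rdiv_lt_0_compat; lra.
    + intros t Ht Hts. rewrite Heq by auto.
      apply Rle_lt_trans with (eps / (d + 1) * d).
      * apply Rmult_le_compat_r; lra.
      * unfold Rdiv. rewrite Rmult_assoc. rewrite <- (Rmult_1_r eps) at 2.
        apply Rmult_lt_compat_l; auto.
        apply (Rmult_lt_reg_l (d + 1)); [lra|]. rewrite <- Rmult_assoc, Rinv_r by lra. lra.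
  - exact Heq.
Qed.
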